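(* Let $\mathbf{NeurRing}$ be the category whose objects are neural rings and whose morphisms are monomial maps, and let $\mathbf{Code}$ be the category of codes with morphisms of codes. The assignment $R$ sending a code $\mathcal{C}$ to its neural ring $R_{\mathcal{C}}$, and a morphism $f:\mathcal{C}\to\mathcal{D}$ to the ring homomorphism $f^*:R_{\mathcal{D}}\to R_{\mathcal{C}}$, $f^*(p)=p\circ f$ (regarding elements of neural rings as functions on codewords), is a contravariant equivalence of categories $\mathbf{Code}\to\mathbf{NeurRing}$.
   Context: A code is a subset $\mathcal{C}\subseteq 2^{[n]}$; in $\mathbf{Code}$, two codes that are equal as sets of subsets (e.g. $\mathcal{C}\subseteq 2^{[n]}$ regarded also as a subset of $2^{[m]}$, $m\ge n$) are the same object. For $\sigma\subseteq[n]$, $\mathrm{Tk}_{\mathcal{C}}(\sigma)=\{c\in\mathcal{C}\mid\sigma\subseteq c\}$; a trunk in $\mathcal{C}$ is a subset that is empty or of this form. A morphism of codes $f:\mathcal{C}\to\mathcal{D}$ is a function such that preimages of trunks in $\mathcal{D}$ are trunks in $\mathcal{C}$. A polynomial $p\in\mathbb{F}_2[x_1,\dots,x_n]$ defines a function $2^{[n]}\to\mathbb{F}_2$ by setting $x_i=1$ if $i\in c$ and $x_i=0$ otherwise. The vanishing ideal of $\mathcal{C}\subseteq 2^{[n]}$ is $I_{\mathcal{C}}=\{p\in\mathbb{F}_2[x_1,\dots,x_n]\mid p(c)=0\ \forall c\in\mathcal{C}\}$, and the neural ring is $R_{\mathcal{C}}=\mathbb{F}_2[x_1,\dots,x_n]/I_{\mathcal{C}}$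 together with its coordinate functions $x_1,\dots,x_n$; it is identified with the ring of functions $\mathcal{C}\to\mathbb{F}_2$. If $R_{\mathcal{C}}$, $R_{\mathcal{D}}$ have coordinates $x_1,\dots,x_n$ and $y_1,\dots,y_m$, a monomial map $R_{\mathcal{C}}\to R_{\mathcal{D}}$ is a ring homomorphism $\phi$ such that for every monomial $p$ in the $x_i$, $\phi(p)$ is either $0$ or a monomial in the $y_j$. *)

(* Defs.v *)
From HB Require Import structures.
From mathcomp Require Import all_boot all_order all_algebra.
Set Implicit Arguments. Unset Strict Implicit. Unset Printing Implicit Defensive.
Import GRing.Theory.
Local Open Scope ring_scope.

Definition code (n : nat) := {set {set 'I_n}}.

Definition word (n : nat) (C : code n) := {c : {set 'I_n} | c \in C}.

(* The neural ring R_C, identified with the ring of F_2-valued functions on C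
   (pointwise operations). *)
Definition NR (n : nat) (C : code n) := {ffun word C -> 'F_2}.

Definition Tk (n : nat) (C : code n) (sigma : {set 'I_n}) : {set word C} :=
  [set c : word C | sigma \subset val c].

Definition is_trunk (n : nat) (C : code n) (T : {set word C}) : Prop :=
  T = set0 \/ exists sigma : {set 'I_n}, T = Tk C sigma.

Definition code_morphism (n m : nat) (C : code n) (D : code m)
  (f : word C -> word D) : Prop :=
  forall T : {set word D}, is_trunk T -> is_trunk (f @^-1: T).

(* The monomial x^sigma = prod_{i in sigma} x_i, as a function on codewords
   (x_i^2 = x_i on codewords, so every monomial is of this form). *)
Definition mono (n : nat) (C : code n) (sigma : {set 'I_n}) : NR C :=
  [ffun c : word C => ((sigma \subset val c) : nat)%:R].

Definition ring_hom (n m : nat) (C : code n) (D : code m)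
  (phi : NR C -> NR D) : Prop :=
  (forall a b, phi (a + b) = phi a + phi b) /\
  (forall a b, phi (a * b) = phi a * phi b) /\
  phi 1 = 1.

Definition monomial_map (n m : nat) (C : code n) (D : code m)
  (phi : NR C -> NR D) : Prop :=
  ring_hom phi /\
  forall sigma : {set 'I_n},
    phi (mono C sigma) = 0 \/ exists tau : {set 'I_m}, phi (mono C sigma) = mono D tau.

Definition pullback (n m : nat) (C : code n) (D : code m)
  (f : word C -> word D) : NR D -> NR C :=
  fun p => [ffun c => p (f c)].

(* Main.v *)
Require Import Defs.
From HB Require Import structures.
From mathcomp Require Import all_boot all_order all_algebra.
From Stdlib Require Import FunctionalExtensionality.
Import GRing.Theory.
Local Open Scope ring_scope.

Lemma F2_cases (x : 'F_2) : x = 0 \/ x = 1.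
Proof. case: x => [[|[|k]] H]; [left|right|by []]; exact: val_inj. Qed.

Lemma bnat_inj (b1 b2 : bool) : ((b1 : nat)%:R : 'F_2) = (b2 : nat)%:R -> b1 = b2.
Proof. by case: b1; case: b2. Qed.

Lemma bnat0 (b : bool) : ((b : nat)%:R : 'F_2) = 0 -> b = false.
Proof. by case: b. Qed.

Lemma monomial_id n (C : code n) : monomial_map (@id (NR C)).
Proof. split; first by []. move=> s; right; by exists s. Qed.

Lemma pull_mono n m (C : code n) (D : code m) (f : word C -> word D) :
  code_morphism f -> monomial_map (pullback f).
Proof.
move=> Hf; split.
  split; first by move=> a b; apply/ffunP => c; rewrite !ffunE.
  split; first by move=> a b; apply/ffunP => c; rewrite !ffunE.
  by apply/ffunP => c; rewrite !ffunE.
move=> s.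
have [H|[t H]] : is_trunk (f @^-1: Tk D s).
- by apply: Hf; right; exists s.
- left; apply/ffunP => c; rewrite !ffunE.
  have : c \notin f @^-1: Tk D s by rewrite H inE.
  by rewrite !inE => /negbTE ->.
- right; exists t; apply/ffunP => c; rewrite !ffunE.
  have := congr1 (fun S : {set word C} => c \in S) H.
  by rewrite /= !inE => ->.
Qed.

Definition ed {m} {D : code m} (d : word D) : NR D := [ffun x => ((x == d) : nat)%:R].

Lemma full n m (C : code n) (D : code m) (phi : NR D -> NR C) :
  monomial_map phi ->
  exists f : word C -> word D, code_morphism f /\ forall p : NR D, phi p = pullback f p.
Proof.
move=> [[Hadd [Hmul H1]] Hmono].
have H0 : phi 0 = 0.
  by apply: (@addrI _ (phi 0)); rewrite -Hadd !addr0.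
have Hsum : forall c : word C, exists d : word D, phi (ed d) c == 1.
  move=> c.
  have E : (1 : NR D) = \sum_d ed d.
    apply/ffunP => x; rewrite sum_ffunE (bigD1 x) //= big1 ?ffunE ?eqxx ?addr0 //.
    by move=> d /negbTE; rewrite ffunE eq_sym => ->.
  have : phi 1 c = 1 by rewrite H1 ffunE.
  rewrite E (big_morph phi Hadd H0) sum_ffunE.
  case: (boolP [exists d, phi (ed d) c == 1]) => [/existsP [d /eqP Hd] | /existsPn Hn] Hs.
    by exists d; rewrite Hd.
  have : \sum_d phi (ed d) c = 0.
    by apply: big1 => d _; case: (F2_cases (phi (ed d) c)) => // Hc; move: (Hn d); rewrite Hc eqxx.
  by rewrite Hs.
pose f c := xchoose (Hsum c).
have Hf : forall c, phi (ed (f c)) c = 1 by move=> c; apply/eqP; exact: (xchooseP (Hsum c)).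
have Hp : forall p, phi p = pullback f p.
  move=> p; apply/ffunP => c; rewrite ffunE.
  rewrite -[phi p c]mulr1 -(Hf c).
  have -> : phi p c * phi (ed (f c)) c = (phi p * phi (ed (f c))) c by rewrite ffunE.
  rewrite -Hmul.
  have -> : p * ed (f c) = if p (f c) == 0 then 0 else ed (f c).
    apply/ffunP => x; rewrite !ffunE.
    case: (eqVneq x (f c)) => [->|/negbTE ne]; rewrite ?ne /=.
      case: (F2_cases (p (f c))) => ->; rewrite ?eqxx ?ffunE ?mulr1 //.
      by rewrite eqxx.
    by rewrite mulr0; case: ifP => _; rewrite ffunE ?ne.
  by case: (F2_cases (p (f c))) => ->; rewrite ?eqxx ?H0 ?ffunE //= Hf.
exists f; split => //.
move=> T [->|[s ->]].
  by left; apply/setP => c; rewrite !inE.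
case: (Hmono s) => [Hz|[t Ht]].
  left; apply/setP => c; rewrite !inE.
  have := congr1 (fun q : NR C => q c) Hz; rewrite Hp !ffunE => /bnat0 ->; done.
right; exists t; apply/setP => c; rewrite !inE.
by have := congr1 (fun q : NR C => q c) Ht; rewrite Hp !ffunE => /bnat_inj.
Qed.

Theorem theorem1p4 :
  (* R is a well-defined contravariant functor Code -> NeurRing *)
  (forall (n m : nat) (C : code n) (D : code m) (f : word C -> word D),
      code_morphism f -> monomial_map (pullback f)) /\
  (forall (n : nat) (C : code n) (p : NR C), pullback (@id (word C)) p = p) /\
  (forall (n m k : nat) (C : code n) (D : code m) (E : code k)
          (f : word C -> word D) (g : word D -> word E) (p : NR E),
      pullback (fun c => g (f c)) p = pullback f (pullback g p)) /\
  (* faithful *)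
  (forall (n m : nat) (C : code n) (D : code m) (f g : word C -> word D),
      code_morphism f -> code_morphism g ->
      (forall p : NR D, pullback f p = pullback g p) -> f = g) /\
  (* full *)
  (forall (n m : nat) (C : code n) (D : code m) (phi : NR D -> NR C),
      monomial_map phi ->
      exists f : word C -> word D,
        code_morphism f /\ forall p : NR D, phi p = pullback f p) /\
  (* essentially surjective *)
  (forall (m : nat) (D : code m),
      exists (n : nat) (C : code n) (phi : NR C -> NR D) (psi : NR D -> NR C),
        monomial_map phi /\ monomial_map psi /\
        (forall p, psi (phi p) = p) /\ (forall q, phi (psi q) = q)).
Proof.
split; first exact: pull_mono.
split; first by move=> n C p; apply/ffunP => c; rewrite ffunE.
split; first by move=> *; apply/ffunP => c; rewrite !ffunE.
split.
  move=> n m C D f g _ _ H; apply: functional_extensionality => c.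
  have := congr1 (fun q : NR C => q c) (H (ed (g c))).
  rewrite !ffunE eqxx; by case: eqP.
split; first exact: full.
move=> m D; exists m, D, (@id (NR D)), (@id (NR D)).
have Hid : monomial_map (@id (NR D)).
  split; first by split; [move=> ? ?; reflexivity | split; move=> *; reflexivity].
  by move=> s; right; exists s.
split; first exact: Hid.
split; first exact: Hid.
by split => ?; reflexivity.
Qed.
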